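(* Let $S_1\subseteq S$ with $|S_1|>1$. Let $\beta\in(0,1/2^{|S|})$, $a>0$, and $\varepsilon\in\left(0,\frac12\left(\frac{a}{L}\right)^{|S|}\frac{\beta(1-\beta)}{L\,|S|^4}\right)$. Let $q$ be an irreducible transition matrix on $S$ such that $\mathbf P_{s,q}\big(T^+_{\overline{S_1}\cup\{t\}}=T^+_{\{t\}}\big)\ge a$ for all $s,t\in S_1$. Let $\widehat q$ be a transition matrix on $S$ that is $(\varepsilon,\beta)$-close to $q$ on $S_1$ and satisfies $\widehat q(t\mid s)=q(t\mid s)$ for all $s\in S\setminus S_1$, $t\in S$. Then: (1) all states of $S_1$ belong to the same recurrent class $R$ of $\widehat q$; (2) the stationary distribution $\widehat\mu$ of $\widehat q$ on $R$ satisfies $\left|1-\frac{\widehat\mu(s\mid S_1)}{\mu(s\mid S_1)}\right|\le 18\beta L$ for every $s\in S_1$, where $\mu(s\mid S_1)=\mu_s/\mu_{S_1}$ and $\widehat\mu(s\mid S_1)=\widehat\mu_s/\widehat\mu_{S_1}$.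
   Context: $S$ is a finite set with $|S|\ge 2$. A transition matrix on $S$ is $q=(q(t\mid s))_{s,t\in S}$ with nonnegative entries and rows summing to $1$; $q(D\mid s)=\sum_{t\in D}q(t\mid s)$, $\overline C=S\setminus C$. For irreducible $q$, $\mu$ is its stationary distribution and $\mu_C=\sum_{s\in C}\mu_s$. $(\mathbf s_n)_{n\ge0}$ is a Markov chain with transition matrix $q$, $\mathbf P_{s,q}$ its law when $\mathbf s_0=s$; for $C\subsetneq S$, $T^+_C=\min\{n\ge1:\mathbf s_n\in C\}$ (with $\min\emptyset=+\infty$). Define $\zeta^1_q=\min_{\emptyset\neq C\subsetneq S_1}\sum_{s\in C}\mu_s q(\overline C\mid s)$. Given $\varepsilon,\beta>0$, $\widehat q$ is $(\varepsilon,\beta)$-close to $q$ on $S_1$ if for all $s,t\in S$, $\left|1-\frac{\widehat q(t\mid s)}{q(t\mid s)}\right|\le\beta$ whenever (a) $\mu_s q(t\mid s)\ge\varepsilon\zeta^1_q$ or (b) $\mu_s\widehat q(t\mid s)\ge\varepsilon\zeta^1_q$ (in case (b) this requires in particular $q(t\mid s)>0$). $L=\sum_{n=1}^{|S|-1}\binom{|S|}{n}n^{|S|}$. The stationary distribution of $\widehat q$ on $R$ is viewed as a distribution on $S$ vanishing outside $R$. *)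

(* Defs.v *)
From HB Require Import structures.
From mathcomp Require Import all_boot all_order all_algebra.
From mathcomp Require Import all_classical all_reals topology normedtype sequences.
Set Implicit Arguments. Unset Strict Implicit. Unset Printing Implicit Defensive.
Import Order.TTheory GRing.Theory Num.Theory numFieldNormedType.Exports.
Local Open Scope ring_scope.

Section MarkovDefs.
Variables (R : realType) (S : finType).

(* A transition matrix is a function q : S -> S -> R with
   q s t = q(t | s) (probability to go from s to t). *)
Definition transition_matrix (q : S -> S -> R) : Prop :=
  (forall s t, 0 <= q s t) /\ (forall s, \sum_(t : S) q s t = 1).

Definition qrel (q : S -> S -> R) : rel S := fun s t => 0 < q s t.

Definition mc_irreducible (q : S -> S -> R) : Prop :=
  forall s t : S, connect (qrel q) s t.

Definition mc_stationary (q : S -> S -> R) (mu : S -> R) : Prop :=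
  (forall s, 0 <= mu s) /\ \sum_(s : S) mu s = 1 /\
  (forall t, \sum_(s : S) mu s * q s t = mu t).

(* R0 is a recurrent class of q: a nonempty closed communicating class,
   i.e. for every x in R0, the set of states reachable from x is exactly R0. *)
Definition recurrent_class (q : S -> S -> R) (R0 : {set S}) : Prop :=
  (0 < #|R0|)%N /\ forall x, x \in R0 -> forall y, connect (qrel q) x y = (y \in R0).

(* first_hit q A n x u = P_{x,q}( T^+_A = n+1 and s_{n+1} = u ), for u in A
   (and 0 for u not in A) *)
Fixpoint first_hit (q : S -> S -> R) (A : {set S}) (n : nat) (x u : S) : R :=
  match n with
  | 0 => if u \in A then q x u else 0
  | n'.+1 => \sum_(y : S | y \notin A) q x y * first_hit q A n' y u
  end.

(* P_{s,q}( T^+_A = T^+_{t} ) for t in A.  The complementary event is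
   { T^+_A < oo and s_{T^+_A} <> t }, whose probability is the limit
   (series of nonnegative terms bounded by 1) below. *)
Definition prob_hit_eq (q : S -> S -> R) (A : {set S}) (t s : S) : R :=
  1 - limn (fun N : nat => \sum_(0 <= n < N) \sum_(u in A | u != t) first_hit q A n s u).

(* All the minimized quantities are <= 1 (for a probability mu and stochastic q),
   so the neutral element 1 does not affect the minimum (the index set is
   nonempty when #|S1| > 1). *)
Definition zeta1 (q : S -> S -> R) (mu : S -> R) (S1 : {set S}) : R :=
  \big[Num.min/1]_(C : {set S} | (0 < #|C|)%N && (C \proper S1))
     (\sum_(s in C) mu s * (\sum_(t in ~: C) q s t)).

Definition mc_close (eps beta : R) (q qh : S -> S -> R) (mu : S -> R) (S1 : {set S})
  : Prop :=
  forall s t : S,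
    (eps * zeta1 q mu S1 <= mu s * q s t ->
       `|1 - qh s t / q s t| <= beta) /\
    (eps * zeta1 q mu S1 <= mu s * qh s t ->
       0 < q s t /\ `|1 - qh s t / q s t| <= beta).

Definition Lconst : nat :=
  \sum_(1 <= n < #|S|) 'C(#|S|, n) * n ^ #|S|.

End MarkovDefs.

(* Main.v *)
Require Import Defs.
From HB Require Import structures.
From mathcomp Require Import all_boot all_order all_algebra.
From mathcomp Require Import all_classical all_reals topology normedtype sequences.
From mathcomp Require Import ring lra zify.
From Stdlib Require Import Lia.
Import Order.TTheory GRing.Theory Num.Theory.
Import numFieldNormedType.Exports.
Local Open Scope ring_scope.

Module GenM.
Local Open Scope classical_set_scope.
Section Gen.
Variables (R : realType) (S : finType).

Lemma sum_split (F : S -> R) (D : {set S}) :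
  \sum_x F x = \sum_(x in D) F x + \sum_(x in ~: D) F x.
Proof.
rewrite (bigID (fun x => x \in D)) /=; congr (_ + _).
by apply: eq_bigl => x; rewrite finset.in_setC.
Qed.

Lemma sum_ge_term (P : pred S) (F : S -> R) j :
  (forall i, P i -> 0 <= F i) -> P j -> F j <= \sum_(i | P i) F i.
Proof.
move=> h Pj; rewrite (bigD1 j) //= lerDl.
by apply: sumr_ge0 => i /andP[Pi _]; apply: h.
Qed.

Lemma balance (p : S -> S -> R) (m : S -> R) :
  (forall s, \sum_t p s t = 1) -> (forall t, \sum_s m s * p s t = m t) ->
  forall D : {set S},
  \sum_(y in D) \sum_(x in ~: D) m x * p x y =
  \sum_(x in D) \sum_(y in ~: D) m x * p x y.
Proof.
move=> p1 st D.
have e1 : \sum_(y in D) m y =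
   \sum_(y in D) \sum_(x in D) m x * p x y + \sum_(y in D) \sum_(x in ~: D) m x * p x y.
  rewrite -big_split /=; apply: eq_bigr => y _; by rewrite -sum_split st.
have e2 : \sum_(x in D) m x =
   \sum_(x in D) \sum_(y in D) m x * p x y + \sum_(x in D) \sum_(y in ~: D) m x * p x y.
  rewrite -big_split /=; apply: eq_bigr => x _.
  by rewrite -!mulr_sumr -mulrDr -sum_split p1 mulr1.
have e3 : \sum_(y in D) \sum_(x in D) m x * p x y = \sum_(x in D) \sum_(y in D) m x * p x y.
  by rewrite exchange_big.
move: e1 e2; rewrite e3 => ->; by move/addrI.
Qed.

Lemma conn_pos (p : S -> S -> R) (m : S -> R) x y :
  (forall s t, 0 <= p s t) -> (forall s, 0 <= m s) ->
  (forall t, \sum_s m s * p s t = m t) ->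
  0 < m x -> connect (qrel p) x y -> 0 < m y.
Proof.
move=> p0 m0 st mx /connectP[pth]; elim: pth x mx => [|z pth IH] x mx /=.
  by move=> _ ->.
move=> /andP[xz pz] ey; apply: (IH z) => //.
rewrite -st; apply: (lt_le_trans _ (@sum_ge_term predT _ x _ _)) => //.
  by apply: mulr_gt0.
by move=> i _; apply: mulr_ge0.
Qed.

Lemma crossing (e : rel S) (C : {set S}) x y :
  connect e x y -> x \in C -> y \notin C ->
  exists u v, [/\ u \in C, v \notin C & e u v].
Proof.
move=> /connectP[pth]; elim: pth x => [|z pth IH] x /=.
  by move=> _ -> ->.
move=> /andP[xz pz] ey xC yC.
case: (boolP (z \in C)) => zC.
  exact: (IH z).
by exists x, z.
Qed.

End Gen.
Section Hit.
Variables (R : realType) (S : finType).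
Variables (q : S -> S -> R) (A : {set S}) (t : S).
Hypothesis q0 : forall s t, 0 <= q s t.
Hypothesis q1 : forall s, \sum_(t : S) q s t = 1.

Lemma fh_ge0 n x u : 0 <= first_hit q A n x u.
Proof.
elim: n x => [|n IH] x /=; first by case: ifP.
by apply: sumr_ge0 => y _; apply: mulr_ge0.
Qed.

Definition gg N x := \sum_(0 <= n < N) \sum_(u in A | u != t) first_hit q A n x u.

Lemma gg_rec N x : gg N.+1 x =
  \sum_(u in A | u != t) q x u + \sum_(y | y \notin A) q x y * gg N y.
Proof.
rewrite /gg big_nat_recl //=; congr (_ + _).
  by apply: eq_bigr => u /andP[-> _].
rewrite exchange_big /=.
under eq_bigr => u _ do rewrite exchange_big /=.
rewrite exchange_big /=; apply: eq_bigr => y _.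
rewrite mulr_sumr exchange_big /=; apply: eq_bigr => n _; rewrite mulr_sumr.
by apply: eq_bigr.
Qed.

Lemma gg_ge0 N x : 0 <= gg N x.
Proof. by apply: sumr_ge0 => n _; apply: sumr_ge0 => u _; apply: fh_ge0. Qed.

Lemma gg_le1 N x : gg N x <= 1.
Proof.
elim: N x => [|N IH] x; first by rewrite /gg big_geq.
rewrite gg_rec -(q1 x) [X in _ <= X](bigID (fun y => y \in A)) /=.
apply: lerD.
  rewrite [X in _ <= X](bigID (fun y => y != t)) /= lerDl.
  by apply: sumr_ge0.
apply: ler_sum => y _; rewrite -[X in _ <= X]mulr1.
by apply: ler_wpM2l.
Qed.

Lemma gg_nd x : nondecreasing_seq (gg ^~ x).
Proof.
apply/nondecreasing_seqP => N /=.
rewrite /gg big_nat_recr //= lerDl.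
by apply: sumr_ge0 => u _; apply: fh_ge0.
Qed.

Lemma gg_cvg x : cvgn (gg ^~ x).
Proof.
apply: nondecreasing_is_cvgn; first exact: gg_nd.
by exists 1 => _ [N _ <-]; apply: gg_le1.
Qed.

Definition GG x := limn (gg ^~ x).

Lemma GG_ge0 x : 0 <= GG x.
Proof.
apply: (le_trans (gg_ge0 0 x)).
exact: (nondecreasing_cvgn_le (gg_nd x) (gg_cvg x)).
Qed.

Lemma GG_le1 x : GG x <= 1.
Proof.
apply: limr_le; first exact: gg_cvg.
by apply: filterE => N; apply: gg_le1.
Qed.

Lemma GG_eq x : GG x = \sum_(u in A | u != t) q x u + \sum_(y | y \notin A) q x y * GG y.
Proof.
have h1 : (fun N => gg N.+1 x) @ \oo --> GG x.
  have H := cvg_shiftS (gg ^~ x) (nbhs (GG x)). move: (gg_cvg x). rewrite -H. exact.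
have h2 : (fun N => gg N.+1 x) @ \oo -->
   \sum_(u in A | u != t) q x u + \sum_(y | y \notin A) q x y * GG y.
  under eq_fun do rewrite gg_rec.
  apply: cvgD; first exact: cvg_cst.
  apply: (cvg_big add_continuous) => y _.
  apply: cvgMl_tmp. exact: gg_cvg.
exact: (cvg_unique _ h1 h2).
Qed.


Lemma f_eq x : t \in A ->
  1 - GG x = \sum_y q x y * (if y == t then 1 else if y \in A then 0 else 1 - GG y).
Proof.
move=> tA.
rewrite GG_eq [in RHS](bigID (fun y => y \in A)) /=.
have -> : \sum_(i | i \in A) q x i * (if i == t then 1 else if i \in A then 0 else 1 - GG i)
   = q x t.
  rewrite (bigD1 t) //= eqxx mulr1 big1 ?addr0 // => y /andP[yA ynt].
  by rewrite (negbTE ynt) yA mulr0.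
have -> : \sum_(i | i \notin A) q x i * (if i == t then 1 else if i \in A then 0 else 1 - GG i)
   = \sum_(i | i \notin A) q x i - \sum_(y | y \notin A) q x y * GG y.
  rewrite -sumrB; apply: eq_bigr => y yA.
  have -> : (y == t) = false by apply/eqP => eyt; move: yA; rewrite eyt tA.
  by rewrite (negbTE yA) mulrBr mulr1.
have h1 := q1 x; rewrite (bigID (fun y => y \in A)) /= (bigD1 t) //= in h1.
have -> : \sum_(u in A | u != t) q x u = \sum_(i | (i \in A) && (i != t)) q x i by [].
move: h1; set c := \sum_(i | _ && _) q x i; set d := \sum_(i | i \notin A) q x i.
move=> h1. rewrite -h1. set e := \sum_(y | _) _ * GG y. 
by rewrite opprD !addrA (addrAC _ c d) addrK.
Qed.

End Hit.

Arguments sum_split {R S} F D.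
Arguments sum_ge_term {R S P F} j.
Arguments balance {R S p m}.
Arguments conn_pos {R S p m x y}.
Arguments crossing {S e C x y}.
Arguments GG {R S}.
Arguments GG_ge0 {R S q A t} q0 q1 x.
Arguments GG_le1 {R S q A t} q0 q1 x.
Arguments f_eq {R S q A t} q0 q1 x.

End GenM.
Import GenM.

Set Implicit Arguments. Unset Strict Implicit.

Section Main.
Variables (R : realType) (S : finType) (S1 : {set S}) (beta a eps : R)
  (q qh : S -> S -> R) (mu : S -> R).
Hypothesis hS1 : (1 < #|S1|)%N.
Hypothesis hb0 : 0 < beta.
Hypothesis hb1 : beta < ((2 ^ #|S|)%:R)^-1.
Hypothesis ha : 0 < a.
Hypothesis he : 0 < eps.
Hypothesis heps : eps < 2^-1 * (a / (Lconst S)%:R) ^+ #|S| * (beta * (1 - beta))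
          / ((Lconst S)%:R * (#|S| ^ 4)%:R).
Hypothesis tq : transition_matrix q.
Hypothesis iq : mc_irreducible q.
Hypothesis smu : mc_stationary q mu.
Hypothesis hit : forall s t, s \in S1 -> t \in S1 ->
     a <= prob_hit_eq q (~: S1 :|: [set t]) t s.
Hypothesis tqh : transition_matrix qh.
Hypothesis close : mc_close eps beta q qh mu S1.
Hypothesis out_eq : forall s t, s \notin S1 -> qh s t = q s t.

Let q0 : forall s t, 0 <= q s t. Proof. by case: tq. Qed.
Let q1 : forall s, \sum_t q s t = 1. Proof. by case: tq. Qed.
Let qh0 : forall s t, 0 <= qh s t. Proof. by case: tqh. Qed.
Let qh1 : forall s, \sum_t qh s t = 1. Proof. by case: tqh. Qed.
Let mu0 : forall s, 0 <= mu s. Proof. by case: smu. Qed.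
Let mu1 : \sum_s mu s = 1. Proof. by case: smu => _ []. Qed.
Let must : forall t, \sum_s mu s * q s t = mu t. Proof. by case: smu => _ []. Qed.

Local Notation Z := (zeta1 q mu S1).
Local Notation n := #|S|.

Lemma exists_pos (m : S -> R) : \sum_s m s = 1 -> exists x, 0 < m x.
Proof.
move=> m1; case: (boolP [exists x, 0 < m x]) => [/existsP//|].
rewrite negb_exists => /forallP h.
have : \sum_s m s <= 0 by apply: sumr_le0 => i _; rewrite leNgt h.
by rewrite m1 ler10.
Qed.

Lemma mu_pos x : 0 < mu x.
Proof.
have [x0 hx0] := exists_pos mu1.
exact: (conn_pos q0 mu0 must hx0 (iq x0 x)).
Qed.

Lemma Z_le (C : {set S}) : (0 < #|C|)%N -> C \proper S1 ->
  Z <= \sum_(x in C) \sum_(y in ~: C) mu x * q x y.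
Proof.
move=> C0 CS; rewrite /zeta1 (bigD1 C) /=; last by rewrite C0 CS.
rewrite ge_min; apply/orP; left.
by under [X in _ <= X]eq_bigr => x _ do rewrite -mulr_sumr.
Qed.

Lemma Z_pos : 0 < Z.
Proof.
rewrite /zeta1; apply: (big_ind (fun z => 0 < z)) => //.
  by move=> x y x0 y0; rewrite lt_min x0.
move=> C /andP[C0 CS].
have [s sC] : exists s, s \in C by apply/card_gt0P.
have [_ [t tS tC]] := properP CS.
have [u [v [uC vC uv]]] := crossing (iq s t) sC tC.
apply: (lt_le_trans _ (@sum_ge_term R S (fun x => x \in C) _ u _ uC)).
  apply: (lt_le_trans _ (ler_wpM2l (mu0 u) (@sum_ge_term R S (fun y => y \in ~: C) _ v _ _))).
  - by apply: mulr_gt0; [apply: mu_pos|].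
  - by move=> i _; apply: q0.
  - by rewrite finset.in_setC.
by move=> i _; apply: mulr_ge0 => //; apply: sumr_ge0.
Qed.


Local Notation AA t := (~: S1 :|: [set t]).
Local Notation ff t := (fun y => 1 - GG q (AA t) t y).

Lemma f_le1 t y : 1 - GG q (AA t) t y <= 1.
Proof. by rewrite lerBlDr lerDl; apply: GG_ge0 q0 q1 _. Qed.

Lemma f_ge0 t y : 0 <= 1 - GG q (AA t) t y.
Proof. by rewrite subr_ge0; apply: GG_le1 q0 q1 _. Qed.

Lemma hitf s t : s \in S1 -> t \in S1 -> a <= 1 - GG q (AA t) t s.
Proof. exact: hit. Qed.

Lemma a_le1 : a <= 1.
Proof.
have [s sS] : exists s, s \in S1 by apply/card_gt0P; apply: ltnW.
exact: (le_trans (hitf sS sS) (f_le1 _ _)).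
Qed.

Lemma direct_flow (C : {set S}) s0 t : C \subset S1 -> s0 \in C -> t \in S1 -> t \notin C ->
  a * Z <= \sum_(x in C) \sum_(y in S1 :\: C) mu x * q x y.
Proof.
move=> CS s0C tS tC.
have tA : t \in AA t by rewrite !inE eqxx orbT.
have key : forall x, x \in C ->
    ff t x - \sum_(y in C) q x y * ff t y <= \sum_(y in S1 :\: C) q x y.
  move=> x xC; rewrite lerBlDr (f_eq q0 q1 x tA).
  rewrite [X in _ <= X + _]big_mkcond [X in _ <= _ + X]big_mkcond -big_split /=.
  apply: ler_sum => y _.
  case: (eqVneq y t) => [->|ynt].
    by rewrite !inE tS (negbTE tC) /= mulr1 addr0.
  case: (boolP (y \in S1)) => yS; last first.
    have yC : y \notin C by apply/negP => /(fintype.subsetP CS); rewrite (negbTE yS).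
    by rewrite !inE (negbTE yS) (negbTE yC) /= mulr0 addr0.
  have -> : (y \in AA t) = false by rewrite !inE yS (negbTE ynt).
  case: (boolP (y \in C)) => yC.
    by rewrite !inE yC /= add0r.
  rewrite !inE yC yS /= addr0 -[X in _ <= X]mulr1.
  by apply: ler_wpM2l; [apply: q0| apply: f_le1].
have CP : C \proper S1 by apply/properP; split => //; exists t.
have C0 : (0 < #|C|)%N by apply/card_gt0P; exists s0.
have e1 : \sum_(x in C) mu x * (ff t x - \sum_(y in C) q x y * ff t y) =
          \sum_(y in C) ff t y * \sum_(x in ~: C) mu x * q x y.
  have ey : forall y, \sum_(x in ~: C) mu x * q x y = mu y - \sum_(x in C) mu x * q x y.
    by move=> y; rewrite -(must y) (sum_split _ C) addrAC subrr add0r.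
  under [RHS]eq_bigr => y _ do rewrite ey mulrBr.
  rewrite sumrB; under eq_bigr => x _ do rewrite mulrBr.
  rewrite sumrB; congr (_ - _).
    by apply: eq_bigr => x _; rewrite mulrC.
  under eq_bigr => i _ do rewrite mulr_sumr.
  under [RHS]eq_bigr => i _ do rewrite mulr_sumr.
  rewrite [RHS]exchange_big /=; apply: eq_bigr => x _; apply: eq_bigr => y _.
  by rewrite mulrA mulrC.
apply: (le_trans _ (ler_sum _ (fun x xC => _ : mu x * (ff t x - \sum_(y in C) q x y * ff t y) <= _))).
  rewrite e1.
  apply: (le_trans _ (ler_sum _ (fun y yC => ler_wpM2r _ (hitf (fintype.subsetP CS y yC) tS)))).
    rewrite -mulr_sumr; apply: ler_wpM2l; first exact: ltW.
    rewrite (balance q1 must C).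
    apply: (le_trans (Z_le C0 CP)); apply: ler_sum => x _; exact: le_refl.
  by move=> y _; apply: sumr_ge0 => x _; apply: mulr_ge0.
move=> x xC; rewrite -mulr_sumr; apply: ler_wpM2l => //; exact: key.
Qed.

Lemma err_pair x y :
  `|mu x * qh x y - mu x * q x y| <= beta * (mu x * q x y) + eps * Z.
Proof.
have [c1 c2] := close x y.
have Z0 := Z_pos; have mx := mu_pos x; have q0xy := q0 x y; have qh0xy := qh0 x y.
have eZ : 0 < eps * Z by apply: mulr_gt0.
have relb : 0 < q x y -> `|1 - qh x y / q x y| <= beta ->
    `|mu x * qh x y - mu x * q x y| <= beta * (mu x * q x y).
  move=> qp hb.
  have E : mu x * qh x y - mu x * q x y = - (mu x * q x y * (1 - qh x y / q x y)).
    by field; rewrite gt_eqF.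
  rewrite E normrN normrM ger0_norm; last by apply: mulr_ge0; [apply: ltW|].
  rewrite mulrC; apply: ler_wpM2r => //; apply: mulr_ge0 => //; exact: ltW.
have hb0' := ltW hb0.
case: (leP (eps * Z) (mu x * q x y)) => h1.
  have qp : 0 < q x y.
    by rewrite -(pmulr_rgt0 _ mx); apply: lt_le_trans h1.
  apply: le_trans (relb qp (c1 h1)) _; rewrite lerDl; exact: ltW.
case: (leP (eps * Z) (mu x * qh x y)) => h2.
  have [qp hb] := c2 h2.
  apply: le_trans (relb qp hb) _; rewrite lerDl; exact: ltW.
have m1 : 0 <= mu x * q x y by apply: mulr_ge0 => //; exact: ltW.
have m2 : 0 <= mu x * qh x y by apply: mulr_ge0 => //; exact: ltW.
have m3 : 0 <= beta * (mu x * q x y) by apply: mulr_ge0.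
rewrite ler_norml; apply/andP; split; lra.
Qed.

Lemma err_sum (A B : {set S}) :
  `|\sum_(x in A) \sum_(y in B) mu x * qh x y - \sum_(x in A) \sum_(y in B) mu x * q x y|
    <= beta * (\sum_(x in A) \sum_(y in B) mu x * q x y) + (n * n)%:R * eps * Z.
Proof.
rewrite -sumrB; under eq_bigr do rewrite -sumrB.
apply: (le_trans (ler_norm_sum _ _ _)).
apply: (le_trans (ler_sum _ (fun x _ => ler_norm_sum _ _ _))).
apply: (le_trans (ler_sum _ (fun x _ => ler_sum _ (fun y _ => err_pair x y)))).
under eq_bigr do rewrite big_split /= sumr_const.
rewrite big_split /= sumr_const.
under eq_bigr do rewrite -mulr_sumr.
rewrite -mulr_sumr; apply: lerD => //.
rewrite -mulrnA -[X in X <= _]mulr_natl -mulrA; apply: ler_wpM2r.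
  by apply: mulr_ge0; [apply: ltW|apply: ltW; apply: Z_pos].
by rewrite ler_nat mulnC; apply: leq_mul; apply: max_card.
Qed.

Lemma n_ge2 : (2 <= n)%N.
Proof. exact: leq_trans hS1 (max_card _). Qed.

Lemma L_ge_nat : (2 ^ n <= 4 * Lconst S)%N.
Proof.
rewrite /Lconst; move: n_ge2; case: #|S| => [|[|m]] // _.
rewrite big_nat_recr //= binSn.
apply: (@leq_trans (4 * (m.+2 * m.+1 ^ m.+2))); last by rewrite leq_mul2l leq_addl.
case: m => [|m]; first by [].
apply: (@leq_trans (m.+2 ^ m.+3)).
  by rewrite leq_exp2r.
rewrite -[X in (X <= _)%N]mul1n; apply: leq_mul => //.
by rewrite -[X in (X <= _)%N]mul1n; apply: leq_mul.
Qed.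

Lemma L_ge1 : 1 <= (Lconst S)%:R :> R.
Proof.
rewrite ler1n; have := L_ge_nat; case: (Lconst S) => //.
by rewrite muln0 leqn0 expn_eq0.
Qed.

Lemma beta4 : 4 * beta < 1.
Proof.
have c4 : 4 <= (2 ^ n)%:R :> R.
  rewrite (_ : 4 = (2 ^ 2)%:R) //; rewrite ler_nat leq_exp2l //; exact: n_ge2.
have c0 : 0 < (2 ^ n)%:R :> R by apply: lt_le_trans c4.
have : beta * (2 ^ n)%:R < 1 by rewrite -ltr_pdivlMr // mul1r.
have : 4 * beta <= (2 ^ n)%:R * beta by apply: ler_wpM2r => //; apply: ltW.
lra.
Qed.

Lemma eps_small : (n * n)%:R * eps <= a * beta / 4.
Proof.
set Lr := (Lconst S)%:R : R.
set nr := n%:R : R.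
have L1 := L_ge1.
have n2 : 2 <= nr by rewrite /nr ler_nat; exact: n_ge2.
have Lp : 0 < Lr by lra.
set X := a / Lr.
have X0 : 0 <= X by apply: divr_ge0; apply: ltW.
have X1 : X <= 1.
  rewrite /X ler_pdivrMr // mul1r; apply: le_trans a_le1 L1.
have Xn : X ^+ n <= X.
  move: n_ge2; case: #|S| => [|m] // _.
  rewrite exprS -[X in _ <= X]mulr1; apply: ler_wpM2l => //.
  exact: exprn_ile1.
have Y : beta * (1 - beta) <= beta.
  have := beta4; have := hb0; nra.
have Y0 : 0 <= beta * (1 - beta).
  have := beta4; have := hb0; nra.
have h1 : eps * (Lr * nr ^+ 4) < 2^-1 * X * beta.
  rewrite -ltr_pdivlMr; last by apply: mulr_gt0 => //; apply: exprn_gt0; lra.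
  apply: (lt_le_trans heps); rewrite /nr -natrX.
  rewrite ler_pM2r; last by rewrite invr_gt0 mulr_gt0 // natrX exprn_gt0 // ltr0n; apply: ltnW; exact: n_ge2.
  rewrite -mulrA -[2^-1 * X * beta]mulrA; apply: ler_wpM2l => //.
    by rewrite invr_ge0.
  apply: (le_trans (ler_wpM2r Y0 Xn)); apply: ler_wpM2l => //.
have h2 : X * Lr = a by rewrite /X divfK // gt_eqF.
rewrite natrM -/nr.
set u := nr * nr * eps.
have u0 : 0 < u by apply: mulr_gt0 => //; apply: mulr_gt0; lra.
have w4 : 4 <= Lr * Lr * (nr * nr).
  have : 1 <= Lr * Lr by nra.
  have : 4 <= nr * nr by nra.
  nra.
have h3 : 2 * u * (Lr * Lr * (nr * nr)) < a * beta.
  rewrite -h2.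
  have : eps * (Lr * nr ^+ 4) * Lr < 2^-1 * X * beta * Lr by rewrite ltr_pM2r.
  rewrite /u; move=> h; have e : nr ^+ 4 = nr * nr * (nr * nr) by rewrite !exprS expr0 mulr1 !mulrA.
  rewrite e in h; lra.
nra.
Qed.

Lemma sum_sub (A B : {set S}) (F : S -> R) : A \subset B -> (forall x, 0 <= F x) ->
  \sum_(x in A) F x <= \sum_(x in B) F x.
Proof.
move=> AB F0; rewrite [X in X <= _]big_mkcond [X in _ <= X]big_mkcond /=.
apply: ler_sum => x _; case: ifP => xA.
  by rewrite (fintype.subsetP AB x xA).
by case: ifP.
Qed.

Lemma Dflow (D : {set S}) s s' : s \in D -> s \in S1 -> s' \in S1 -> s' \notin D ->
  a * Z <= \sum_(x in D) \sum_(y in ~: D) mu x * q x y.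
Proof.
move=> sD sS s'S s'D.
have CS : D :&: S1 \subset S1 by apply: subsetIr.
have sC : s \in D :&: S1 by rewrite inE sD.
have s'C : s' \notin D :&: S1 by rewrite inE negb_and s'D.
apply: (le_trans (direct_flow CS sC s'S s'C)).
apply: (le_trans (sum_sub (subsetIl D S1) _)).
  by move=> x; apply: sumr_ge0 => y _; apply: mulr_ge0.
apply: ler_sum => x _; apply: sum_sub.
  by apply/fintype.subsetP => y; rewrite !inE; case: (y \in D); case: (y \in S1).
by move=> y; apply: mulr_ge0.
Qed.

Lemma flow_bounds (A B : {set S}) :
  a * Z <= \sum_(x in A) \sum_(y in B) mu x * q x y ->
  (1 - (beta + beta / 4)) * (\sum_(x in A) \sum_(y in B) mu x * q x y)
     <= \sum_(x in A) \sum_(y in B) mu x * qh x y /\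
  \sum_(x in A) \sum_(y in B) mu x * qh x y
     <= (1 + (beta + beta / 4)) * (\sum_(x in A) \sum_(y in B) mu x * q x y).
Proof.
move=> hF; have h := err_sum A B.
set F := \sum_(x in A) \sum_(y in B) mu x * q x y in hF h *.
set Fh := \sum_(x in A) \sum_(y in B) mu x * qh x y in h *.
have Z0 := Z_pos.
have e1 : (n * n)%:R * eps * Z <= a * beta / 4 * Z by apply: ler_wpM2r; [apply: ltW | apply: eps_small].
have e2 : a * beta / 4 * Z <= beta / 4 * F.
  have -> : a * beta / 4 * Z = beta / 4 * (a * Z) by ring.
  by apply: ler_wpM2l => //; apply: divr_ge0 => //; apply: ltW.
move: h; rewrite ler_norml => /andP[h1 h2].
split; lra.
Qed.

Lemma conn_S1 s t : s \in S1 -> t \in S1 -> connect (qrel qh) s t.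
Proof.
move=> sS tS; apply/idPn => nst.
set C := [set x in S1 | connect (qrel qh) s x].
have CS : C \subset S1 by apply/fintype.subsetP => x; rewrite inE => /andP[].
have sC : s \in C by rewrite inE sS connect0.
have tC : t \notin C by rewrite inE tS /= (negbTE nst).
have hF := direct_flow CS sC tS tC.
have [hlo _] := flow_bounds hF.
have zero : \sum_(x in C) \sum_(y in S1 :\: C) mu x * qh x y = 0.
  apply: big1 => x xC; apply: big1 => y yC.
  have := qh0 x y; rewrite le_eqVlt => /orP[/eqP <-|h]; first by rewrite mulr0.
  exfalso; move: yC; rewrite !inE => /andP[yC yS].
  move: xC; rewrite inE => /andP[_ sx].
  have sy : connect (qrel qh) s y by apply: connect_trans sx (connect1 _).
  by move: yC; rewrite yS sy.
rewrite zero in hlo.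
have aZ : 0 < a * Z by apply: mulr_gt0 => //; apply: Z_pos.
have := beta4; move: hF hlo aZ.
set F := \sum_(x in C) \sum_(y in S1 :\: C) mu x * q x y.
move=> hF hlo aZ hb4.
have F0 : 0 < F by apply: lt_le_trans hF.
have d0 : 0 < 1 - (beta + beta / 4) by lra.
have : 0 < (1 - (beta + beta / 4)) * F by apply: mulr_gt0.
lra.
Qed.

Lemma reach_S1 y : exists2 z, z \in S1 & connect (qrel qh) y z.
Proof.
have [s0 s0S] : exists s0, s0 \in S1 by apply/card_gt0P; apply: ltnW.
move: (iq y s0) => /connectP[p]; elim: p y => [|z p IH] y /=.
  by move=> _ e; exists y; [rewrite -e | apply: connect0].
move=> /andP[yz pz] e.
case: (boolP (y \in S1)) => yS; first by exists y => //; apply: connect0.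
have [z' z'S zz'] := IH z pz e.
exists z' => //; apply: connect_trans zz'; apply: connect1.
by rewrite /qrel out_eq.
Qed.

Lemma part1 : exists s0, s0 \in S1 /\
  recurrent_class qh [set y | connect (qrel qh) s0 y] /\
  S1 \subset [set y | connect (qrel qh) s0 y].
Proof.
have [s0 s0S] : exists s0, s0 \in S1 by apply/card_gt0P; apply: ltnW.
exists s0; split => //; split.
  split; first by apply/card_gt0P; exists s0; rewrite inE connect0.
  move=> x; rewrite inE => s0x y; rewrite inE; apply/idP/idP.
    by apply: connect_trans.
  move=> s0y; have [z zS xz] := reach_S1 x.
  by apply: connect_trans xz (connect_trans (conn_S1 zS s0S) s0y).
by apply/fintype.subsetP => s sS; rewrite inE; apply: conn_S1.
Qed.

Lemma muh_pos (muh : S -> R) s0 : s0 \in S1 -> mc_stationary qh muh ->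
  (forall s, s \notin [set y | connect (qrel qh) s0 y] -> muh s = 0) ->
  forall s, s \in S1 -> 0 < muh s.
Proof.
move=> s0S [m0 [m1 mst]] sup s sS.
have [x hx] := exists_pos m1.
have xR : connect (qrel qh) s0 x.
  apply/idPn => nx; have := sup x; rewrite inE => /(_ nx) e.
  by move: hx; rewrite e ltxx.
have [z zS xz] := reach_S1 x.
exact: (conn_pos qh0 m0 mst hx (connect_trans xz (conn_S1 zS sS))).
Qed.

Lemma pow_bound (x : R) k : 0 <= x -> x <= 1 -> (1 + x) ^+ k + x <= 1 + x * (2 ^ k)%:R.
Proof.
move=> x0 x1; elim: k => [|k IH]; first by rewrite expr0 expn0 mulr1.
rewrite exprS expnS natrM.
have p1 : 1 <= (2 ^ k)%:R :> R by rewrite ler1n expn_gt0.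
set c := (2 ^ k)%:R in IH p1 *.
have : (1 + x) * (1 + x) ^+ k <= (1 + x) * (1 + x * c - x).
  by apply: ler_wpM2l; lra.
have h : 0 <= x * (1 - x) * (c - 1) by apply: mulr_ge0; [apply: mulr_ge0|]; lra.
nra.
Qed.

Section Part2.
Variable muh : S -> R.
Hypothesis smuh : mc_stationary qh muh.
Hypothesis mhpos : forall s, s \in S1 -> 0 < muh s.

Let mh0 : forall s, 0 <= muh s. Proof. by case: smuh. Qed.
Let mhst : forall t, \sum_s muh s * qh s t = muh t. Proof. by case: smuh => _ []. Qed.

Local Notation r x := (muh x / mu x).
Local Notation dl := (beta + beta / 4).
Local Notation rho := (1 + 3 * dl).

Lemma muhE x : muh x = r x * mu x.
Proof. by rewrite divfK // gt_eqF // mu_pos. Qed.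

Lemma gap lam s s' : 0 < lam -> s \in S1 -> s' \in S1 ->
  rho * lam < r s -> r s' <= rho * lam -> exists x, lam < r x /\ r x <= rho * lam.
Proof.
move=> lam0 sS s'S hs hs'.
case: (boolP [exists x, (lam < r x) && (r x <= rho * lam)]).
  by move=> /existsP[x /andP[h1 h2]]; exists x.
rewrite negb_exists => /forallP nogap; exfalso.
set D := [set x | rho * lam < r x].
have sD : s \in D by rewrite inE.
have s'D : s' \notin D by rewrite inE -leNgt.
have hF := Dflow sD sS s'S s'D.
have FinE : \sum_(x in ~: D) \sum_(y in D) mu x * q x y =
            \sum_(x in D) \sum_(y in ~: D) mu x * q x y.
  by rewrite -(balance q1 must D) exchange_big.
have hF' : a * Z <= \sum_(x in ~: D) \sum_(y in D) mu x * q x y by rewrite FinE.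
have [lo _] := flow_bounds hF.
have [_ hi] := flow_bounds hF'.
rewrite FinE in hi.
have bal := balance qh1 mhst D.
rewrite exchange_big /= in bal.
have hout : rho * lam * (\sum_(x in D) \sum_(y in ~: D) mu x * qh x y) <=
            \sum_(x in D) \sum_(y in ~: D) muh x * qh x y.
  rewrite mulr_sumr; apply: ler_sum => x xD; rewrite mulr_sumr; apply: ler_sum => y _.
  rewrite muhE -[X in _ <= X]mulrA; apply: ler_wpM2r.
    by apply: mulr_ge0; [apply: ltW; apply: mu_pos | apply: qh0].
  by apply: ltW; move: xD; rewrite inE.
have hin : \sum_(x in ~: D) \sum_(y in D) muh x * qh x y <=
           lam * (\sum_(x in ~: D) \sum_(y in D) mu x * qh x y).
  rewrite mulr_sumr; apply: ler_sum => x xD; rewrite mulr_sumr; apply: ler_sum => y _.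
  rewrite muhE -[X in X <= _]mulrA; apply: ler_wpM2r.
    by apply: mulr_ge0; [apply: ltW; apply: mu_pos | apply: qh0].
  have := nogap x; move: xD; rewrite !inE -leNgt => xD.
  by rewrite xD andbT -leNgt.
move: hout hin lo hi hF; rewrite bal.
set F := \sum_(x in D) \sum_(y in ~: D) mu x * q x y.
set Fo := \sum_(x in D) \sum_(y in ~: D) mu x * qh x y.
set Fi := \sum_(x in ~: D) \sum_(y in D) mu x * qh x y.
set M := \sum_(x in ~: D) \sum_(y in D) muh x * qh x y.
move=> hout hin lo hi hF.
have aZ : 0 < a * Z by apply: mulr_gt0 => //; apply: Z_pos.
have F0 : 0 < F by apply: lt_le_trans hF.
have hb4 := beta4.
have h1 : rho * Fo <= Fi.
  rewrite -(ler_pM2l lam0); move: (le_trans hout hin); rewrite mulrA [lam * rho]mulrC; exact.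
have h2 : rho * ((1 - dl) * F) <= rho * Fo by apply: ler_wpM2l lo; have := hb0; lra.
have hb := hb0.
have c : 0 < rho * (1 - dl) - (1 + dl).
  have d0 : 0 < dl by lra.
  have d1 : 0 < 1 - 3 * dl by lra.
  have := mulr_gt0 d0 d1; nra.
have := mulr_gt0 c F0.
nra.
Qed.

Lemma ratio s s' : s \in S1 -> s' \in S1 -> r s <= rho ^+ n * r s'.
Proof.
move=> sS s'S; rewrite leNgt; apply/negP => h.
have hb := hb0.
have rho1 : 1 < rho by lra.
have m0 : 0 < r s' by apply: divr_gt0; [apply: mhpos | apply: mu_pos].
pose D k := [set x | rho ^+ k * r s' < r x].
have step : forall k, (k < n)%N -> (#|D k.+1| < #|D k|)%N.
  move=> k kn; apply: proper_card; apply/properP; split.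
    apply/fintype.subsetP => x; rewrite !inE; apply: le_lt_trans.
    rewrite ler_pM2r // ler_eXn2l //.
  have lam0 : 0 < rho ^+ k * r s' by apply: mulr_gt0 => //; apply: exprn_gt0; lra.
  have h1 : rho * (rho ^+ k * r s') < r s.
    apply: le_lt_trans h; rewrite mulrA -exprS ler_pM2r // ler_eXn2l //.
  have h2 : r s' <= rho * (rho ^+ k * r s').
    rewrite mulrA -exprS -[X in X <= _]mul1r ler_pM2r //.
    by apply: exprn_ege1; apply: ltW.
  have [x [hx1 hx2]] := gap lam0 sS s'S h1 h2.
  exists x; rewrite !inE //.
  by rewrite -leNgt exprS -mulrA.
have ind : forall k, (k <= n)%N -> (#|D k| + k <= #|D 0|)%N.
  elim => [|k IH] kn; first by rewrite addn0.
  have := step k kn; have := IH (ltnW kn); lia.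
have := ind n (leqnn _).
have Dn : (0 < #|D n|)%N by apply/card_gt0P; exists s; rewrite inE.
have D0 : (#|D 0| < n)%N.
  rewrite -cardsT; apply: proper_card; apply/properP; split; first by apply: finset.subsetT.
  by exists s'; rewrite !inE // expr0 mul1r ltxx.
lia.
Qed.

Lemma final s : s \in S1 ->
  `|1 - (muh s / \sum_(x in S1) muh x) / (mu s / \sum_(x in S1) mu x)|
     <= 18 * beta * (Lconst S)%:R.
Proof.
move=> sS.
have hb := hb0; have hb4 := beta4.
set P := rho ^+ n.
have P1 : 1 <= P by apply: exprn_ege1; lra.
have Pb : P - 1 <= 18 * beta * (Lconst S)%:R.
  have pb : P + 3 * dl <= 1 + 3 * dl * (2 ^ n)%:R by apply: pow_bound; lra.
  have L4 : (2 ^ n)%:R <= 4 * (Lconst S)%:R :> R.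
    by rewrite -natrM ler_nat; apply: L_ge_nat.
  have : 3 * dl * (2 ^ n)%:R <= 3 * dl * (4 * (Lconst S)%:R) by apply: ler_wpM2l => //; lra.
  have L1 := L_ge1.
  have : 0 <= beta * (Lconst S)%:R by apply: mulr_ge0; lra.
  lra.
have mus := mu_pos s.
have rs0 : 0 < r s by apply: divr_gt0 => //; apply: mhpos.
set Sh := \sum_(x in S1) muh x.
set Sm := \sum_(x in S1) mu x.
have Sm0 : 0 < Sm.
  apply: lt_le_trans mus _; apply: (@sum_ge_term R S (fun x => x \in S1)) => //.
have Sh0 : 0 < Sh.
  apply: lt_le_trans (mhpos sS) _; apply: (@sum_ge_term R S (fun x => x \in S1)) => //.
have hShu : Sh <= P * r s * Sm.
  rewrite /Sh /Sm mulr_sumr; apply: ler_sum => x xS.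
  rewrite [muh x]muhE; apply: ler_wpM2r; first exact: ltW (mu_pos x).
  by apply: ratio.
have hShl : r s * Sm <= P * Sh.
  rewrite /Sh /Sm !mulr_sumr; apply: ler_sum => x xS.
  rewrite [muh x]muhE mulrA; apply: ler_wpM2r; first exact: ltW (mu_pos x).
  by apply: ratio.
have XE : (muh s / Sh) / (mu s / Sm) = r s * Sm / Sh.
  by field; rewrite !gt_eqF.
rewrite XE; set X := r s * Sm / Sh.
have X0 : 0 < X by apply: divr_gt0 => //; apply: mulr_gt0.
have XP : X <= P by rewrite /X ler_pdivrMr // mulrC.
have PX : 1 <= P * X.
  rewrite /X mulrA ler_pdivlMr // mul1r mulrA; exact: hShu.
apply: le_trans Pb; rewrite ler_norml; apply/andP; split; first lra.
nra.
Qed.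

End Part2.

Lemma main_all : exists R0 : {set S},
    [/\ recurrent_class qh R0,
        S1 \subset R0 &
        forall muh : S -> R,
          mc_stationary qh muh -> (forall s, s \notin R0 -> muh s = 0) ->
          forall s, s \in S1 ->
            `|1 - (muh s / \sum_(x in S1) muh x) / (mu s / \sum_(x in S1) mu x)|
              <= 18 * beta * (Lconst S)%:R].
Proof.
have [s0 [s0S [rec sub]]] := part1.
exists [set y | connect (qrel qh) s0 y]; split => // muh smuh supp s sS.
exact: (final smuh (muh_pos s0S smuh supp) sS).
Qed.

End Main.

Unset Implicit Arguments.

Theorem theorem2 (R : realType) (S : finType) (S1 : {set S})
  (beta a eps : R) (q qh : S -> S -> R) (mu : S -> R) :
  (1 < #|S1|)%N ->
  0 < beta -> beta < ((2 ^ #|S|)%:R)^-1 ->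
  0 < a ->
  0 < eps ->
  eps < 2^-1 * (a / (Lconst S)%:R) ^+ #|S| * (beta * (1 - beta))
          / ((Lconst S)%:R * (#|S| ^ 4)%:R) ->
  transition_matrix q -> mc_irreducible q -> mc_stationary q mu ->
  (forall s t, s \in S1 -> t \in S1 ->
     a <= prob_hit_eq q (~: S1 :|: [set t]) t s) ->
  transition_matrix qh ->
  mc_close eps beta q qh mu S1 ->
  (forall s t, s \notin S1 -> qh s t = q s t) ->
  exists R0 : {set S},
    [/\ recurrent_class qh R0,
        S1 \subset R0 &
        forall muh : S -> R,
          mc_stationary qh muh -> (forall s, s \notin R0 -> muh s = 0) ->
          forall s, s \in S1 ->
            `|1 - (muh s / \sum_(x in S1) muh x) / (mu s / \sum_(x in S1) mu x)|
              <= 18 * beta * (Lconst S)%:R].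
Proof.
move=> hS1 hb0 hb1 ha he heps tq iq smu hit tqh close out_eq.
exact: (main_all hS1 hb0 hb1 ha he heps tq iq smu hit tqh close out_eq).
Qed.
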